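(* In the migration–birth–death dynamics described below, if the dynamics is not $(t,0)$-stable, then the migration phase at step $t$ increases $\Phi(\mathbf{x})=\sum_v\mathbf{x}_v^2$ by at least $2\alpha_{\min}\epsilon\delta^3$.
   Context: Migration–birth–death dynamics: at each step there is a finite connected undirected graph of types, each type $v$ has mass $\mathbf{x}_v\ge0$, masses sum to $1$, and each edge $uv$ carries a continuously differentiable, increasing, odd function $F_{uv}=F_{vu}:[-1,1]\to[-1,1]$ with $F_{uv}(0)=0$. Let $\alpha_{\min}=\min_{uv,\,x\in[-1,1]}F'_{uv}(x)$ and $\alpha_{\max}=\max_{uv,\,x\in[-1,1]}F'_{uv}(x)$. Fixed parameters: $\epsilon>0$, $\delta>0$, $p\in[0,1]$, and a distribution $\mathcal{D}$ with support $[\beta_{\min},\beta_{\max}]$. Each step consists of three phases in order. (1) Migration: for each edge $uv$, an amount $\mathbf{x}_u\mathbf{x}_vF_{uv}(\mathbf{x}_u-\mathbf{x}_v)$ of mass moves from $v$ to $u$ (negative meaning the reverse direction), all simultaneously from current masses, except that no mass moves along $uv$ if $|\mathbf{x}_u-\mathbf{x}_v|\le\delta$. (2) Birth: with probability $p$ (independently of other steps) a new type $v$ is created; each existing type $u$ independently draws $Z_u\sim\mathcal{D}$ and transfers mass $Z_u\mathbf{x}_u$ to $v$; $v$ is connected to the existing graph arbitrarily so that it remains connected. (3) Death: a type $v$ with $\mathbf{x}_v\le\epsilon$ dies: its mass is split equally among its neighbours, $v$ is removed, and edges are added arbitrarily among its neighbours to keep the graph connected. The dynamics is $(T,d)$-stable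 iff for all $t$ with $T\le t\le T+d$ no population mass moves in the migration phase of step $t$. *)

(* Defs.v *)
From HB Require Import structures.
From mathcomp Require Import all_boot all_order all_algebra.
From mathcomp Require Import all_classical all_reals all_analysis.
Set Implicit Arguments. Unset Strict Implicit. Unset Printing Implicit Defensive.
Import Order.TTheory GRing.Theory Num.Theory.
Import numFieldNormedType.Exports.
Local Open Scope classical_set_scope.
Local Open Scope ring_scope.

Definition simple_connected_graph (V : finType) (E : rel V) : Prop :=
  symmetric E /\ irreflexive E /\ (forall u v : V, connect E u v).

Definition mass_vector (R : realType) (V : finType) (x : V -> R) : Prop :=
  (forall v, 0 <= x v) /\ \sum_(v : V) x v = 1.

Definition edge_function (R : realType) (F : R -> R) : Prop :=
  (forall x : R, -1 <= x <= 1 -> derivable F x 1) /\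
  {within `[(-1) : R, 1], continuous (derive1 F)} /\
  (forall x y : R, -1 <= x <= 1 -> -1 <= y <= 1 -> x < y -> F x < F y) /\
  (forall x : R, -1 <= x <= 1 -> F (- x) = - F x) /\
  F 0 = 0 /\
  (forall x : R, -1 <= x <= 1 -> -1 <= F x <= 1).

Definition is_alpha_min (R : realType) (V : finType) (E : rel V)
    (F : V -> V -> R -> R) (alpha : R) : Prop :=
  (forall u v, E u v -> forall x : R, -1 <= x <= 1 -> alpha <= derive1 (F u v) x) /\
  (exists u v, E u v /\ exists x : R, -1 <= x <= 1 /\ derive1 (F u v) x = alpha).

Definition moved (R : realType) (V : finType) (F : V -> V -> R -> R)
    (delta : R) (x : V -> R) (u v : V) : R :=
  if delta < `|x u - x v| then x u * x v * F u v (x u - x v) else 0.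

Definition migrate (R : realType) (V : finType) (E : rel V)
    (F : V -> V -> R -> R) (delta : R) (x : V -> R) : V -> R :=
  fun u => x u + \sum_(v : V | E u v) moved F delta x u v.

(* Some population mass moves in the migration phase
   (i.e. the dynamics is NOT (t,0)-stable at the current step t). *)
Definition mass_moves (R : realType) (V : finType) (E : rel V)
    (F : V -> V -> R -> R) (delta : R) (x : V -> R) : Prop :=
  exists u v, E u v /\ moved F delta x u v != 0.

Definition Phi (R : realType) (V : finType) (x : V -> R) : R :=
  \sum_(v : V) x v ^+ 2.

(* Main.v *)
Require Import Defs.
From HB Require Import structures.
From mathcomp Require Import all_boot all_order all_algebra.
From mathcomp Require Import all_classical all_reals all_analysis.
From mathcomp Require Import lra ring.
Import Order.TTheory GRing.Theory Num.Theory.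
Import numFieldNormedType.Exports.
Local Open Scope classical_set_scope.
Local Open Scope ring_scope.
Lemma mvt_edge (R : realType) (F : R -> R) (a b : R) :
  edge_function F -> -1 <= a -> a < b -> b <= 1 ->
  exists c : R, -1 <= c <= 1 /\ F b - F a = derive1 F c * (b - a).
Proof.
move=> [dF [_ _]] ha hab hb.
have dI : forall z, a <= z <= b -> derivable F z 1.
  move=> z /andP[h1 h2]; apply: dF; apply/andP; split.
  - exact: le_trans ha h1.
  - exact: le_trans h2 hb.
have h1 : forall z, z \in `]a, b[%R -> is_derive z 1 F (derive1 F z).
  move=> z; rewrite in_itv /= => /andP[h1 h2].
  rewrite derive1E; apply: derivableP; apply: dI.
  by rewrite (ltW h1) (ltW h2).
have h2 : {within `[a, b], continuous F}.
  apply: derivable_within_continuous => z; rewrite in_itv /= => /andP[k1 k2].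
  by apply: dI; rewrite k1 k2.
have [c cin eq] := @MVT R F (derive1 F) a b hab h1 h2.
exists c; split => //.
move: cin; rewrite in_itv /= => /andP[h3 h4]; apply/andP; split.
+ apply: le_trans ha (ltW h3).
+ apply: le_trans (ltW h4) hb.
Qed.
Lemma edge_nonneg (R : realType) (F : R -> R) d :
  edge_function F -> -1 <= d <= 1 -> 0 <= d * F d.
Proof.
move=> [_ [_ [hinc [_ [h0 _]]]]] hd.
have h01 : -1 <= (0:R) <= 1 by rewrite lerN10 ?ler01 /=.
case: (ltgtP d 0) => [dn|dp|->]; last by rewrite mul0r.
- have := hinc _ _ hd h01 dn; rewrite h0 => hF.
  by rewrite nmulr_rge0 // ltW.
- have := hinc _ _ h01 hd dp; rewrite h0 => hF.
  by rewrite mulr_ge0 // ltW.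
Qed.

Lemma prod_bound (R : realType) (a b eps delta : R) :
  0 < eps -> 0 < delta -> eps < a -> eps < b -> delta < `|a - b| ->
  eps * delta <= a * b.
Proof.
move=> he hd ha hb.
case: (lerP a b) => hab.
- move=> h; nra.
- move=> h; nra.
Qed.

Lemma edge_lower (R : realType) (F : R -> R) (alpha d : R) :
  edge_function F -> (forall c, -1 <= c <= 1 -> alpha <= derive1 F c) ->
  -1 <= d <= 1 -> alpha * d ^+ 2 <= d * F d.
Proof.
move=> hF hal /andP[hd1 hd2].
have h0 : F 0 = 0 by case: hF => _ [_ [_ [_ [h _]]]].
case: (ltgtP d 0) => [dn|dp|->]; last by rewrite h0 !mul0r expr0n mulr0.
- have [c [hc eq]] := @mvt_edge R F _ _ hF hd1 dn ler01.
  have -> : F d = derive1 F c * d by move: eq; rewrite h0; lra.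
  have := hal c hc => hc'.
  have : 0 <= (derive1 F c - alpha) * d ^+ 2 by rewrite mulr_ge0 ?subr_ge0 ?sqr_ge0.
  nra.
- have [c [hc eq]] := @mvt_edge R F _ _ hF (lerN10 _) dp hd2.
  have -> : F d = derive1 F c * d by move: eq; rewrite h0; lra.
  have := hal c hc => hc'.
  have : 0 <= (derive1 F c - alpha) * d ^+ 2 by rewrite mulr_ge0 ?subr_ge0 ?sqr_ge0.
  nra.
Qed.

Theorem mainTheorem11 (R : realType) (V : finType) (E : rel V)
    (F : V -> V -> R -> R) (x : V -> R) (eps delta alpha_min : R) :
  0 < eps -> 0 < delta ->
  simple_connected_graph E ->
  (forall u v, F u v = F v u) ->
  (forall u v, E u v -> edge_function (F u v)) ->
  is_alpha_min E F alpha_min ->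
  mass_vector x ->
  (forall v, eps < x v) ->
  mass_moves E F delta x ->
  Phi x + 2 * alpha_min * eps * delta ^+ 3 <= Phi (migrate E F delta x).
Proof.
move=> he hd [Esym [Eirr _]] Fsym hE [halpha _] [x0 x1] xeps [u0 [v0 [Euv hmv]]].
have xle1 : forall v, x v <= 1.
  move=> v; rewrite -x1 (bigD1 v) //= lerDl sumr_ge0 // => w _; exact: x0.
have hdf : forall u v, -1 <= x u - x v <= 1.
  move=> u v; have := x0 u; have := x0 v; have := xle1 u; have := xle1 v.
  move=> *; apply/andP; split; lra.
pose h u v := if E u v then moved F delta x u v else 0.
have hanti : forall u v, h v u = - h u v.
  move=> u v; rewrite /h Esym; case: ifP => Euv'; last by rewrite oppr0.
  rewrite /moved distrC; case: ifP => _; last by rewrite oppr0.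
  rewrite Fsym; have -> : x v - x u = - (x u - x v) by rewrite opprB.
  case: (hE u v Euv') => _ [_ [_ [hodd _]]].
  by rewrite hodd ?hdf // mulrN [x v * x u]mulrC.
have hmig : forall u, migrate E F delta x u = x u + \sum_v h u v.
  by move=> u; rewrite /migrate big_mkcond.
pose S := \sum_u x u * \sum_v h u v.
have step1 : \sum_v x v ^+ 2 + 2 * S <= \sum_v (migrate E F delta x v) ^+ 2.
  rewrite /S mulr_sumr -big_split /=; apply: ler_sum => u _; rewrite hmig.
  set D := \sum_v h u v.
  have := sqr_ge0 D; nra.
pose g u v := (x u - x v) * h u v.
have key : 2 * S = \sum_u \sum_v g u v.
  have e1 : \sum_u \sum_v g u v
      = \sum_u \sum_v x u * h u v - \sum_u \sum_v x v * h u v.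
    rewrite -sumrB; apply: eq_bigr => u _; rewrite -sumrB.
    by apply: eq_bigr => v _; rewrite /g mulrBl.
  have e2 : \sum_u \sum_v x v * h u v = - \sum_u \sum_v x u * h u v.
    rewrite exchange_big /= -sumrN; apply: eq_bigr => v _.
    rewrite -sumrN; apply: eq_bigr => u _; by rewrite hanti mulrN.
  have e3 : S = \sum_u \sum_v x u * h u v.
    by apply: eq_bigr => u _; rewrite mulr_sumr.
  rewrite e1 e2 e3; ring.
have gnn : forall u v, 0 <= g u v.
  move=> u v; rewrite /g /h; case: ifP => Euv'; last by rewrite mulr0.
  rewrite /moved; case: ifP => _; last by rewrite mulr0.
  rewrite mulrCA; apply: mulr_ge0; first by apply: mulr_ge0; apply: x0.
  exact: edge_nonneg (hE _ _ Euv') (hdf u v).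
have gsym : forall u v, g v u = g u v.
  by move=> u v; rewrite /g hanti; ring.
have gbig : alpha_min * eps * delta ^+ 3 <= g u0 v0.
  move: hmv; rewrite /g /h Euv /moved; case: ifP => hlt; last by rewrite eqxx.
  move=> _; set d := x u0 - x v0.
  have hpb := @prod_bound R _ _ _ _ he hd (xeps u0) (xeps v0) hlt.
  have hxx : 0 <= x u0 * x v0 by apply: mulr_ge0; apply: x0.
  have hdF := @edge_nonneg R _ _ (hE _ _ Euv) (hdf u0 v0).
  rewrite [d * _]mulrCA.
  case: (lerP alpha_min 0) => ha.
  - have h3 : 0 <= eps * delta ^+ 3 by rewrite mulr_ge0 ?exprn_ge0 ?ltW.
    have h4 := mulr_le0_ge0 ha h3.
    rewrite -mulrA; apply: le_trans h4 _; exact: mulr_ge0 hxx hdF.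
  - have hl := @edge_lower R _ _ _ (hE _ _ Euv) (halpha _ _ Euv) (hdf u0 v0).
    have hd2 : delta ^+ 2 <= d ^+ 2.
      rewrite -(real_normK (num_real d)) ler_sqr ?nnegrE ?ltW //.
      exact: lt_trans hd hlt.
    have : (eps * delta) * (alpha_min * delta ^+ 2) <= (x u0 * x v0) * (d * F u0 v0 d).
      apply: ler_pM => //.
      + by rewrite mulr_ge0 ?ltW.
      + by rewrite mulr_ge0 ?exprn_ge0 ?ltW.
      + apply: le_trans hl; apply: ler_wpM2l; [exact: ltW | exact: hd2].
    have -> : eps * delta * (alpha_min * delta ^+ 2) = alpha_min * eps * delta ^+ 3 by ring.
    by [].
have Gnn : forall u, 0 <= \sum_v g u v by move=> u; apply: sumr_ge0 => v _.
have uv : u0 != v0 by apply/eqP => e; move: Euv; rewrite e Eirr.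
have tb : 2 * g u0 v0 <= \sum_u \sum_v g u v.
  have vu : v0 != u0 by rewrite eq_sym.
  rewrite (bigD1 u0) //=.
  have a1 : g u0 v0 <= \sum_v g u0 v.
    by rewrite (bigD1 v0) //= lerDl sumr_ge0.
  have a2 : g u0 v0 <= \sum_v g v0 v.
    by rewrite (bigD1 u0) //= gsym lerDl sumr_ge0.
  have a3 : \sum_v g v0 v <= \sum_(i | i != u0) \sum_v g i v.
    by rewrite [X in _ <= X](bigD1 v0) //= lerDl sumr_ge0.
  lra.
rewrite /Phi.
lra.
Qed.
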